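(* There exists a constant $C>0$ such that for all $x>0$, \[ \sum_{k\in\mathbf{Z}}|k|\,J_k(x)^2\le C\,x . \]
   Context: For $n\in\mathbf{Z}$ and $z\in\mathbf{C}$, $J_n(z)=\frac{1}{2\pi}\int_{-\pi}^{\pi}e^{i(nu-z\sin u)}\,du$ is the Bessel function of the first kind. *)

(* Defs.v *)
From Stdlib Require Import Reals ZArith.
From Coquelicot Require Import Coquelicot.
Open Scope R_scope.

Definition cexp (w : C) : C :=
  (exp (Re w) * cos (Im w), exp (Re w) * sin (Im w)).

Definition BesselJ (n : Z) (z : C) : C :=
  Cmult (RtoC (/ (2 * PI)))
    (RInt (V := C_R_CompleteNormedModule)
       (fun u : R => cexp (Cmult Ci (Cminus (RtoC (IZR n * u)) (Cmult z (RtoC (sin u))))))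
       (- PI) PI).

(* Main.v *)
Require Import Defs.
From Stdlib Require Import Reals ZArith Lra Lia.
From Coquelicot Require Import Coquelicot.
Open Scope R_scope.

Definition contR (f : R -> R) := forall u, continuous f u.

Lemma contR_mult f g : contR f -> contR g -> contR (fun u => f u * g u).
Proof. intros Hf Hg u. apply (continuous_mult (K:=R_AbsRing) f g u); auto. Qed.

Lemma contR_plus f g : contR f -> contR g -> contR (fun u => f u + g u).
Proof. intros Hf Hg u. apply (continuous_plus (V:=R_NormedModule) f g u); auto. Qed.

Lemma exR f a b : contR f -> ex_RInt f a b.
Proof. intros H. apply (ex_RInt_continuous (V:=R_CompleteNormedModule)). intros; apply H. Qed.

Lemma RInt_plusR f g a b : contR f -> contR g ->
  RInt (fun u => f u + g u) a b = RInt f a b + RInt g a b.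
Proof. intros Hf Hg. apply (RInt_plus (V:=R_CompleteNormedModule)); apply exR; auto. Qed.

Lemma RInt_minusR f g a b : contR f -> contR g ->
  RInt (fun u => f u - g u) a b = RInt f a b - RInt g a b.
Proof. intros Hf Hg. apply (RInt_minus (V:=R_CompleteNormedModule)); apply exR; auto. Qed.

Lemma RInt_scalR c f a b : contR f ->
  RInt (fun u => c * f u) a b = c * RInt f a b.
Proof. intros Hf. apply (RInt_scal (V:=R_CompleteNormedModule)); apply exR; auto. Qed.

Lemma RInt_constR c a b : RInt (fun _ => c) a b = (b - a) * c.
Proof. rewrite RInt_const. reflexivity. Qed.

Lemma contR_sum (g : nat -> R -> R) n : (forall k, contR (g k)) ->
  contR (fun u => sum_f_R0 (fun k => g k u) n).
Proof. intros H. induction n; simpl. apply H. apply contR_plus; auto. Qed.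

Lemma RInt_sum (g : nat -> R -> R) n a b : (forall k, contR (g k)) ->
  RInt (fun u => sum_f_R0 (fun k => g k u) n) a b = sum_f_R0 (fun k => RInt (g k) a b) n.
Proof. intros H. induction n; simpl. reflexivity.
  rewrite RInt_plusR. rewrite IHn. reflexivity. apply contR_sum; auto. apply H. Qed.

Lemma RInt_le0 f a b : a <= b -> contR f -> (forall u, 0 <= f u) -> 0 <= RInt f a b.
Proof. intros Hab Hf Hp. assert (E: RInt (fun _ => 0) a b = 0) by (rewrite RInt_constR; lra).
  rewrite <- E.
  apply RInt_le; auto. apply exR; intro; apply continuous_const. apply exR; auto. Qed.

Lemma RInt_leC f a b c : a <= b -> contR f -> (forall u, f u <= c) -> RInt f a b <= (b - a) * c.
Proof. intros Hab Hf Hp. rewrite <- RInt_constR.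
  apply RInt_le; [exact Hab | apply exR; exact Hf | apply exR; intro; apply continuous_const | intros; apply Hp]. Qed.

Lemma sum_single (f : nat -> R) k n : (forall j, j <> k -> f j = 0) -> (k <= n)%nat ->
  sum_f_R0 f n = f k.
Proof. intros H. induction n; intros Hk.
  - simpl. assert (k = 0%nat) by lia. subst; auto.
  - simpl. destruct (Nat.eq_dec k (S n)).
    + subst. rewrite (sum_eq_R0 f n). ring. intros j Hj; apply H; lia.
    + rewrite IHn by lia. rewrite (H (S n)) by lia. ring.
Qed.

Lemma contR_ext f g : (forall u, f u = g u) -> contR f -> contR g.
Proof. intros E H u. apply (continuous_ext f g u); auto. Qed.
Lemma contR_const c : contR (fun _ => c).
Proof. intro u; apply continuous_const. Qed.
Lemma contR_opp f : contR f -> contR (fun u => - f u).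
Proof. intros H. apply (contR_ext (fun u => (-1) * f u)). intros; ring. apply contR_mult; auto. apply contR_const. Qed.
Lemma contR_minus f g : contR f -> contR g -> contR (fun u => f u - g u).
Proof. intros. apply contR_plus; auto. apply contR_opp; auto. Qed.
Lemma contR_scal c f : contR f -> contR (fun u => c * f u).
Proof. intros. apply contR_mult; auto. apply contR_const. Qed.
Lemma contR_sq f : contR f -> contR (fun u => f u ^ 2).
Proof. intros. apply (contR_ext (fun u => f u * f u)). intros; ring. apply contR_mult; auto. Qed.
Lemma bessel (phi : R -> R) (e : nat -> R -> R) (D a b : R) n :
 0 < D -> a <= b -> contR phi -> (forall k, contR (e k)) ->
 (forall j k, j <> k -> RInt (fun u => e j u * e k u) a b = 0) ->
 (forall k, RInt (fun u => e k u * e k u) a b <= D) ->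
 sum_f_R0 (fun k => (RInt (fun u => phi u * e k u) a b)^2) n <= D * RInt (fun u => phi u ^ 2) a b.
Proof.
  intros HD Hab Hphi He Hort Hd.
  set (c k := RInt (fun u => phi u * e k u) a b).
  set (S u := sum_f_R0 (fun k => c k * e k u) n).
  set (T := sum_f_R0 (fun k => c k ^ 2) n).
  assert (HS : contR S). { apply contR_sum. intro k. intro u. apply (continuous_mult (K:=R_AbsRing) (fun _ => c k) (e k) u). apply continuous_const. apply He. }
  assert (I1 : RInt (fun u => phi u * S u) a b = T).
  { rewrite (RInt_ext _ (fun u => sum_f_R0 (fun k => c k * (phi u * e k u)) n)).
    rewrite RInt_sum. unfold T. apply sum_eq. intros k _. rewrite RInt_scalR. fold (c k). ring.
    apply contR_mult; auto.
    intro k. intro u. apply (continuous_mult (K:=R_AbsRing) (fun _ => c k) _ u). apply continuous_const. apply contR_mult; auto.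
    intros u _. unfold S. rewrite scal_sum. apply sum_eq. intros; ring. }
  assert (Hce : forall k, contR (fun u => c k * e k u)).
  { intro k. intro u. apply (continuous_mult (K:=R_AbsRing) (fun _ => c k) _ u). apply continuous_const. apply He. }
  assert (Inner : forall k, (k <= n)%nat -> RInt (fun u => e k u * S u) a b = c k * RInt (fun u => e k u * e k u) a b).
  { intros k Hk.
    rewrite (RInt_ext _ (fun u => sum_f_R0 (fun j => c j * (e k u * e j u)) n)).
    2:{ intros u _. unfold S. rewrite scal_sum. apply sum_eq. intros; ring. }
    rewrite RInt_sum.
    2:{ intro j. intro u. apply (continuous_mult (K:=R_AbsRing) (fun _ => c j) _ u). apply continuous_const. apply contR_mult; auto. }
    rewrite (sum_single _ k n).
    - rewrite RInt_scalR. reflexivity. apply contR_mult; auto.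
    - intros j Hj. rewrite RInt_scalR. rewrite Hort. ring. auto. apply contR_mult; auto.
    - exact Hk. }
  assert (I2 : RInt (fun u => S u * S u) a b = sum_f_R0 (fun k => c k * (c k * RInt (fun u => e k u * e k u) a b)) n).
  { rewrite (RInt_ext _ (fun u => sum_f_R0 (fun k => c k * (e k u * S u)) n)).
    2:{ intros u _. unfold S at 1. rewrite Rmult_comm, scal_sum. apply sum_eq. intros; ring. }
    rewrite RInt_sum.
    2:{ intro k. intro u. apply (continuous_mult (K:=R_AbsRing) (fun _ => c k) _ u). apply continuous_const. apply contR_mult; auto. }
    apply sum_eq. intros k Hk. rewrite RInt_scalR. rewrite Inner; auto. apply contR_mult; auto. }
  assert (I2le : RInt (fun u => S u * S u) a b <= D * T).
  { rewrite I2. unfold T. rewrite scal_sum. apply sum_Rle. intros k _.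
    specialize (Hd k). assert (0 <= c k ^ 2) by (apply pow2_ge_0). nra. }
  assert (Pos : 0 <= RInt (fun u => (phi u - S u / D)^2) a b).
  { apply RInt_le0; auto. apply contR_sq. apply contR_minus; auto.
    apply (contR_ext (fun u => / D * S u)). intros; unfold Rdiv; ring. apply contR_scal; auto.
    intros; apply pow2_ge_0. }
  rewrite (RInt_ext _ (fun u => (phi u ^ 2 + (-(2/D)) * (phi u * S u)) + (/ D ^ 2) * (S u * S u))) in Pos.
  rewrite RInt_plusR in Pos. rewrite RInt_plusR in Pos. rewrite !RInt_scalR in Pos. rewrite I1 in Pos.
  set (P := RInt (fun u => phi u ^ 2) a b) in *.
  set (I := RInt (fun u => S u * S u) a b) in *.
  assert (0 <= D^2 * P - 2 * D * T + I).
  { replace (D^2 * P - 2 * D * T + I) with (D^2 * (P + - (2 / D) * T + / D ^ 2 * I)) by (field; lra).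
    apply Rmult_le_pos; nra. }
  change (T <= D * P).
  assert (0 <= D * (D * P - T)) by lra.
  assert (0 <= D * P - T); [|lra].
  destruct (Rle_or_lt 0 (D * P - T)) as [|Hn]; auto.
  nra.
  all: try (intros u _; match goal with |- ?x = ?y => change (@eq R x y) end; field; lra).
  all: repeat first [apply contR_const | apply contR_plus | apply contR_sq | apply contR_mult | assumption].
Qed.
Ltac fixeq := match goal with |- ?x = ?y => change (@eq R x y) end.
Ltac cont_auto := let u := fresh "u" in intro u; apply (ex_derive_continuous (K:=R_AbsRing) (V:=R_NormedModule)); auto_derive; auto.

Lemma ftc f df a b : (forall x, is_derive f x (df x)) -> contR df -> RInt df a b = f b - f a.
Proof. intros Hd Hc. apply (is_RInt_unique (V:=R_CompleteNormedModule)).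
  apply (is_RInt_derive (V:=R_CompleteNormedModule)); intros; auto. Qed.

Lemma int_cos m : m <> 0 -> sin (m * PI) = 0 -> RInt (fun u => cos (m * u)) (-PI) PI = 0.
Proof. intros Hm Hs.
  rewrite (ftc (fun u => sin (m * u) / m)).
  - replace (m * - PI) with (- (m * PI)) by ring. rewrite sin_neg, Hs. fixeq. field; auto.
  - intro x. auto_derive; auto. field; auto.
  - cont_auto.
Qed.

Lemma sinZ (z : Z) : sin (IZR z * PI) = 0.
Proof. apply sin_eq_0_1. exists z; auto. Qed.

Lemma sin_nat_pm j k : sin ((INR j + INR k) * PI) = 0 /\ sin ((INR j - INR k) * PI) = 0.
Proof. rewrite !INR_IZR_INZ. rewrite <- plus_IZR, <- minus_IZR. split; apply sinZ. Qed.

Lemma INR_ne j k : j <> k -> INR j - INR k <> 0 /\ INR j + INR k <> 0.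
Proof. intros H. split.
  - intro E. apply H. apply INR_eq. lra.
  - intro E. assert (INR j = 0 /\ INR k = 0) as [A B] by (pose proof (pos_INR j); pose proof (pos_INR k); lra).
    apply H. change 0 with (INR 0) in A, B. apply INR_eq in A; apply INR_eq in B. congruence.
Qed.

Lemma cos_orth j k : j <> k -> RInt (fun u => cos (INR j * u) * cos (INR k * u)) (-PI) PI = 0.
Proof. intros H. destruct (INR_ne j k H) as [H1 H2]. destruct (sin_nat_pm j k) as [S1 S2].
  rewrite (RInt_ext _ (fun u => / 2 * cos ((INR j - INR k) * u) + / 2 * cos ((INR j + INR k) * u))).
  rewrite RInt_plusR, !RInt_scalR, !int_cos; auto. fixeq; ring.
  all: try cont_auto.
  intros u _. replace ((INR j - INR k) * u) with (INR j * u - INR k * u) by ring.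
  replace ((INR j + INR k) * u) with (INR j * u + INR k * u) by ring.
  rewrite cos_minus, cos_plus. fixeq; field.
Qed.

Lemma sin_orth j k : j <> k -> RInt (fun u => sin (INR j * u) * sin (INR k * u)) (-PI) PI = 0.
Proof. intros H. destruct (INR_ne j k H) as [H1 H2]. destruct (sin_nat_pm j k) as [S1 S2].
  rewrite (RInt_ext _ (fun u => / 2 * cos ((INR j - INR k) * u) - / 2 * cos ((INR j + INR k) * u))).
  rewrite RInt_minusR, !RInt_scalR, !int_cos; auto. fixeq; ring.
  all: try cont_auto.
  intros u _. replace ((INR j - INR k) * u) with (INR j * u - INR k * u) by ring.
  replace ((INR j + INR k) * u) with (INR j * u + INR k * u) by ring.
  rewrite cos_minus, cos_plus. fixeq; field.
Qed.

Lemma PI_le : - PI <= PI.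
Proof. pose proof PI_RGT_0; lra. Qed.

Lemma sq_bound_int (f : R -> R) : contR f -> (forall u, f u * f u <= 1) ->
  RInt (fun u => f u * f u) (-PI) PI <= 2 * PI.
Proof. intros Hc Hb. replace (2 * PI) with ((PI - - PI) * 1) by ring.
  apply RInt_leC. apply PI_le. apply contR_mult; auto. auto. Qed.

Lemma cos_sq_le x : cos x * cos x <= 1.
Proof. pose proof (COS_bound x); nra. Qed.
Lemma sin_sq_le x : sin x * sin x <= 1.
Proof. pose proof (SIN_bound x); nra. Qed.

Lemma bessel_cos (phi : R -> R) n : contR phi ->
  sum_f_R0 (fun k => (RInt (fun u => phi u * cos (INR k * u)) (-PI) PI)^2) n <= 2 * PI * RInt (fun u => phi u ^ 2) (-PI) PI.
Proof. intros Hp. apply (bessel phi (fun k u => cos (INR k * u))).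
  pose proof PI_RGT_0; lra. apply PI_le. auto. intros k; cont_auto.
  intros; apply cos_orth; auto.
  intros k. apply sq_bound_int. cont_auto. intros; apply cos_sq_le. Qed.

Lemma bessel_sin (phi : R -> R) n : contR phi ->
  sum_f_R0 (fun k => (RInt (fun u => phi u * sin (INR k * u)) (-PI) PI)^2) n <= 2 * PI * RInt (fun u => phi u ^ 2) (-PI) PI.
Proof. intros Hp. apply (bessel phi (fun k u => sin (INR k * u))).
  pose proof PI_RGT_0; lra. apply PI_le. auto. intros k; cont_auto.
  intros; apply sin_orth; auto.
  intros k. apply sq_bound_int. cont_auto. intros; apply sin_sq_le. Qed.

Definition Af x K := RInt (fun u => cos (K * u - x * sin u)) (-PI) PI.
Definition Bf x K := RInt (fun u => sin (K * u - x * sin u)) (-PI) PI.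

Lemma integrand_eq (n : Z) x u :
  cexp (Cmult Ci (Cminus (RtoC (IZR n * u)) (Cmult (RtoC x) (RtoC (sin u))))) =
  (cos (IZR n * u - x * sin u), sin (IZR n * u - x * sin u)).
Proof.
  unfold cexp, Cmult, Ci, Cminus, Cplus, Copp, RtoC, Re, Im; simpl.
  replace (0 * (IZR n * u + - (x * sin u - 0 * 0)) - 1 * (0 + - (x * 0 + 0 * sin u))) with 0 by ring.
  replace (0 * (0 + - (x * 0 + 0 * sin u)) + 1 * (IZR n * u + - (x * sin u - 0 * 0))) with (IZR n * u - x * sin u) by ring.
  rewrite exp_0. f_equal; ring.
Qed.

Lemma Bf_zero x K : Bf x K = 0.
Proof.
  set (f := fun u => sin (K * u - x * sin u)).
  assert (Hc : contR f) by (unfold f; cont_auto).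
  assert (H1 : is_RInt f (-PI) PI (Bf x K)).
  { apply (RInt_correct (V:=R_CompleteNormedModule)). apply exR; auto. }
  assert (H2 : is_RInt (V:=R_NormedModule) f PI (-PI) (opp (Bf x K))) by (apply (is_RInt_swap (V:=R_NormedModule)); exact H1).
  assert (H3 : is_RInt (V:=R_NormedModule) f (- - PI) (- PI) (opp (Bf x K))) by (rewrite Ropp_involutive; auto).
  apply (is_RInt_comp_opp (V:=R_NormedModule)) in H3.
  assert (H4 : is_RInt (V:=R_NormedModule) f (-PI) PI (opp (Bf x K))).
  { apply (is_RInt_ext (V:=R_NormedModule) _ _ _ _ _ ) with (2 := H3).
    intros u _. unfold f. change (opp ?a) with (- a). rewrite sin_neg.
    replace (K * - u - x * - sin u) with (- (K * u - x * sin u)) by ring. rewrite sin_neg. fixeq; ring. }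
  pose proof (is_RInt_unique (V:=R_CompleteNormedModule) _ _ _ _ H4) as E.
  assert (E2 : @eq R (Bf x K) (- Bf x K)) by exact E. lra.
Qed.

Lemma BesselJ_eq n x : BesselJ n (RtoC x) = RtoC (Af x (IZR n) / (2 * PI)).
Proof. unfold BesselJ.
  rewrite (RInt_ext (V:=C_R_CompleteNormedModule) _ (fun u => (cos (IZR n * u - x * sin u), sin (IZR n * u - x * sin u)))).
  2:{ intros; apply integrand_eq. }
  rewrite (is_RInt_unique (V:=C_R_CompleteNormedModule) _ _ _ (Af x (IZR n), Bf x (IZR n))).
  - rewrite Bf_zero. unfold Cmult, RtoC; simpl. pose proof PI_RGT_0. f_equal; field; lra.
  - apply (is_RInt_fct_extend_pair (U:=R_NormedModule) (V:=R_NormedModule)); simpl;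
    apply (RInt_correct (V:=R_CompleteNormedModule)); apply exR; cont_auto.
Qed.
Definition Acf x K := RInt (fun u => cos u * cos (K * u - x * sin u)) (-PI) PI.
Definition Pf x K := RInt (fun u => cos (x * sin u) * cos (K * u)) (-PI) PI.
Definition Qf x K := RInt (fun u => sin (x * sin u) * sin (K * u)) (-PI) PI.
Definition Pcf x K := RInt (fun u => (cos u * cos (x * sin u)) * cos (K * u)) (-PI) PI.
Definition Qcf x K := RInt (fun u => (cos u * sin (x * sin u)) * sin (K * u)) (-PI) PI.

Lemma A_p x K : Af x K = Pf x K + Qf x K.
Proof. unfold Af, Pf, Qf. rewrite <- RInt_plusR; try cont_auto.
  apply RInt_ext. intros u _. rewrite cos_minus. fixeq; ring. Qed.

Lemma A_m x K : Af x (- K) = Pf x K - Qf x K.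
Proof. unfold Af, Pf, Qf. rewrite <- RInt_minusR; try cont_auto.
  apply RInt_ext. intros u _. replace (- K * u - x * sin u) with (- (K * u + x * sin u)) by ring.
  rewrite cos_neg, cos_plus. fixeq; ring. Qed.

Lemma Ac_p x K : Acf x K = Pcf x K + Qcf x K.
Proof. unfold Acf, Pcf, Qcf. rewrite <- RInt_plusR; try cont_auto.
  apply RInt_ext. intros u _. rewrite cos_minus. fixeq; ring. Qed.

Lemma Ac_m x K : Acf x (- K) = Pcf x K - Qcf x K.
Proof. unfold Acf, Pcf, Qcf. rewrite <- RInt_minusR; try cont_auto.
  apply RInt_ext. intros u _. replace (- K * u - x * sin u) with (- (K * u + x * sin u)) by ring.
  rewrite cos_neg, cos_plus. fixeq; ring. Qed.

Lemma A_ftc x K : sin (K * PI) = 0 -> K * Af x K = x * Acf x K.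
Proof. intros Hs.
  assert (E : RInt (fun u => (K - x * cos u) * cos (K * u - x * sin u)) (-PI) PI = 0).
  { rewrite (ftc (fun u => sin (K * u - x * sin u))).
    - rewrite sin_neg, sin_PI. replace (K * PI - x * 0) with (K * PI) by ring.
      replace (K * - PI - x * - 0) with (- (K * PI)) by ring. rewrite sin_neg, Hs. fixeq; ring.
    - intro u. auto_derive; auto. unfold Rminus; ring.
    - cont_auto. }
  rewrite (RInt_ext _ (fun u => K * cos (K * u - x * sin u) - x * (cos u * cos (K * u - x * sin u)))) in E.
  rewrite RInt_minusR, !RInt_scalR in E. unfold Af, Acf.
  assert (E2 : @eq R (K * RInt (fun u : R => cos (K * u - x * sin u)) (- PI) PI -
     x * RInt (fun u : R => cos u * cos (K * u - x * sin u)) (- PI) PI) 0) by exact E. lra.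
  all: try cont_auto.
  intros u _. fixeq; ring.
Qed.
Lemma alg K x A A' P Q Pc Qc : 0 <= K -> 0 < x ->
  A = P + Q -> A' = P - Q -> K * A = x * (Pc + Qc) -> - K * A' = x * (Pc - Qc) ->
  K * (A ^ 2 + A' ^ 2) <= x * (P ^ 2 + Q ^ 2 + Pc ^ 2 + Qc ^ 2).
Proof. intros HK Hx E1 E2 E3 E4.
  assert (H1 : (K * A) ^ 2 + (K * A') ^ 2 = 2 * x ^ 2 * (Pc ^ 2 + Qc ^ 2)).
  { replace ((K * A') ^ 2) with ((- K * A') ^ 2) by ring. rewrite E3, E4. ring. }
  assert (H2 : A ^ 2 + A' ^ 2 = 2 * (P ^ 2 + Q ^ 2)) by (subst; ring).
  assert (H3 : 2 * x * (K * (A ^ 2 + A' ^ 2)) <= (x ^ 2 + K ^ 2) * (A ^ 2 + A' ^ 2)).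
  { assert (0 <= (x - K) ^ 2 * (A ^ 2 + A' ^ 2)) by (apply Rmult_le_pos; [apply pow2_ge_0 | nra]). nra. }
  assert (H4 : (x ^ 2 + K ^ 2) * (A ^ 2 + A' ^ 2) = 2 * x ^ 2 * (P ^ 2 + Q ^ 2 + Pc ^ 2 + Qc ^ 2)).
  { replace ((x ^ 2 + K ^ 2) * (A ^ 2 + A' ^ 2)) with (x ^ 2 * (A ^ 2 + A' ^ 2) + ((K * A) ^ 2 + (K * A') ^ 2)) by ring.
    rewrite H1, H2. ring. }
  rewrite H4 in H3.
  assert (0 <= 2 * x * (x * (P ^ 2 + Q ^ 2 + Pc ^ 2 + Qc ^ 2) - K * (A ^ 2 + A' ^ 2))) by nra.
  apply Rmult_le_reg_l with (2 * x). lra.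
  nra.
Qed.

Lemma int_sq_le (f : R -> R) : contR f -> (forall u, f u ^ 2 <= 1) -> RInt (fun u => f u ^ 2) (-PI) PI <= 2 * PI.
Proof. intros Hc Hb. replace (2 * PI) with ((PI - - PI) * 1) by ring.
  apply RInt_leC. apply PI_le. apply contR_sq; auto. auto. Qed.

Definition tk x k := INR k * ((Af x (INR k) / (2 * PI)) ^ 2 + (Af x (- INR k) / (2 * PI)) ^ 2).

Lemma tk_nonneg x k : 0 <= tk x k.
Proof. unfold tk. apply Rmult_le_pos. apply pos_INR. pose proof (pow2_ge_0 (Af x (INR k) / (2 * PI))).
  pose proof (pow2_ge_0 (Af x (- INR k) / (2 * PI))). lra. Qed.

Lemma tk_le x k : 0 < x -> tk x k <=
  x / (4 * PI ^ 2) * (Pf x (INR k) ^ 2 + Qf x (INR k) ^ 2 + Pcf x (INR k) ^ 2 + Qcf x (INR k) ^ 2).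
Proof. intros Hx. pose proof PI_RGT_0.
  assert (Hs : sin (INR k * PI) = 0) by (rewrite INR_IZR_INZ; apply sinZ).
  assert (Hs' : sin (- INR k * PI) = 0) by (replace (- INR k * PI) with (- (INR k * PI)) by ring; rewrite sin_neg, Hs; ring).
  pose proof (alg (INR k) x (Af x (INR k)) (Af x (- INR k)) (Pf x (INR k)) (Qf x (INR k)) (Pcf x (INR k)) (Qcf x (INR k))
    (pos_INR k) Hx (A_p x _) (A_m x _)) as Halg.
  rewrite <- Ac_p, <- Ac_m in Halg. specialize (Halg (A_ftc x _ Hs) (A_ftc x _ Hs')).
  unfold tk. replace (INR k * ((Af x (INR k) / (2 * PI)) ^ 2 + (Af x (- INR k) / (2 * PI)) ^ 2))
    with (/ (4 * PI ^ 2) * (INR k * (Af x (INR k) ^ 2 + Af x (- INR k) ^ 2))) by (field; lra).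
  replace (x / (4 * PI ^ 2) * (Pf x (INR k) ^ 2 + Qf x (INR k) ^ 2 + Pcf x (INR k) ^ 2 + Qcf x (INR k) ^ 2))
    with (/ (4 * PI ^ 2) * (x * (Pf x (INR k) ^ 2 + Qf x (INR k) ^ 2 + Pcf x (INR k) ^ 2 + Qcf x (INR k) ^ 2))) by (field; lra).
  apply Rmult_le_compat_l; auto. left; apply Rinv_0_lt_compat. nra.
Qed.

Lemma sum_scal_l (f : nat -> R) c n : sum_f_R0 (fun k => c * f k) n = c * sum_f_R0 f n.
Proof. rewrite scal_sum. apply sum_eq; intros; ring. Qed.

Lemma sum_tk x n : 0 < x -> sum_f_R0 (tk x) n <= 4 * x.
Proof. intros Hx. pose proof PI_RGT_0.
  eapply Rle_trans. apply sum_Rle. intros k _. apply (tk_le x k Hx).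
  rewrite sum_scal_l. rewrite !plus_sum.
  assert (B1 : sum_f_R0 (fun k => Pf x (INR k) ^ 2) n <= 2 * PI * (2 * PI)).
  { eapply Rle_trans. apply (bessel_cos (fun u => cos (x * sin u))). cont_auto.
    apply Rmult_le_compat_l. lra. apply int_sq_le. cont_auto. intro u. pose proof (cos_sq_le (x * sin u)). simpl. nra. }
  assert (B2 : sum_f_R0 (fun k => Qf x (INR k) ^ 2) n <= 2 * PI * (2 * PI)).
  { eapply Rle_trans. apply (bessel_sin (fun u => sin (x * sin u))). cont_auto.
    apply Rmult_le_compat_l. lra. apply int_sq_le. cont_auto. intro u. pose proof (sin_sq_le (x * sin u)). simpl. nra. }
  assert (B3 : sum_f_R0 (fun k => Pcf x (INR k) ^ 2) n <= 2 * PI * (2 * PI)).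
  { eapply Rle_trans. apply (bessel_cos (fun u => cos u * cos (x * sin u))). cont_auto.
    apply Rmult_le_compat_l. lra. apply int_sq_le. cont_auto. intro u. pose proof (cos_sq_le (x * sin u)).
    pose proof (cos_sq_le u). simpl.
    assert (0 <= cos u * cos u) by nra. assert (0 <= cos (x * sin u) * cos (x * sin u)) by nra. nra. }
  assert (B4 : sum_f_R0 (fun k => Qcf x (INR k) ^ 2) n <= 2 * PI * (2 * PI)).
  { eapply Rle_trans. apply (bessel_sin (fun u => cos u * sin (x * sin u))). cont_auto.
    apply Rmult_le_compat_l. lra. apply int_sq_le. cont_auto. intro u. pose proof (sin_sq_le (x * sin u)).
    pose proof (cos_sq_le u). simpl.
    assert (0 <= cos u * cos u) by nra. assert (0 <= sin (x * sin u) * sin (x * sin u)) by nra. nra. }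
  assert (Hp : 0 < x / (4 * PI ^ 2)) by (apply Rdiv_lt_0_compat; nra).
  replace (4 * x) with (x / (4 * PI ^ 2) * (4 * (2 * PI * (2 * PI)))) by (field; lra).
  apply Rmult_le_compat_l. lra. lra.
Qed.
Lemma term_eq x k :
  Cmult (RtoC (INR k))
    (Cplus (Cmult (BesselJ (Z.of_nat k) (RtoC x)) (BesselJ (Z.of_nat k) (RtoC x)))
           (Cmult (BesselJ (- Z.of_nat k) (RtoC x)) (BesselJ (- Z.of_nat k) (RtoC x))))
  = RtoC (tk x k).
Proof. rewrite !BesselJ_eq. rewrite opp_IZR, <- INR_IZR_INZ.
  unfold tk, Cmult, Cplus, RtoC; simpl. f_equal; ring. Qed.

Lemma sum_n_RtoC (a : nat -> R) n :
  sum_n (G := C_AbelianMonoid) (fun k => RtoC (a k)) n = RtoC (sum_f_R0 a n).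
Proof. induction n.
  - rewrite sum_O. reflexivity.
  - rewrite sum_Sn, IHn. simpl. unfold plus; simpl. unfold Cplus, RtoC; simpl. f_equal; ring.
Qed.

Lemma is_series_RtoC (a : nat -> R) l : Un_cv (fun n => sum_f_R0 a n) l ->
  is_series (K := C_AbsRing) (V := C_NormedModule) (fun k => RtoC (a k)) (RtoC l).
Proof. intros H. apply is_lim_seq_Reals in H.
  unfold is_series. apply (filterlim_ext (fun n => RtoC (sum_f_R0 a n))).
  intros n. symmetry. apply sum_n_RtoC.
  apply filterlim_locally. intros eps.
  unfold is_lim_seq in H. apply (proj1 (filterlim_locally _ _)) with (eps := eps) in H.
  apply (filter_imp (fun n => ball l eps (sum_f_R0 a n))); auto.
  intros n Hn. split. exact Hn. simpl. apply ball_center.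
Qed.
Theorem lemma3p4 :
  exists C0 : R, 0 < C0 /\
    forall x : R, 0 < x ->
      exists S : R,
        is_series (K := C_AbsRing) (V := C_NormedModule)
          (fun k : nat =>
             Cmult (RtoC (INR k))
               (Cplus (Cmult (BesselJ (Z.of_nat k) (RtoC x)) (BesselJ (Z.of_nat k) (RtoC x)))
                      (Cmult (BesselJ (- Z.of_nat k) (RtoC x)) (BesselJ (- Z.of_nat k) (RtoC x)))))
          (RtoC S)
        /\ S <= C0 * x.
Proof.
  exists 4. split. lra.
  intros x Hx.
  assert (Hg : Un_growing (fun n => sum_f_R0 (tk x) n)).
  { intro n. simpl. pose proof (tk_nonneg x (S n)). lra. }
  assert (Hb : has_ub (fun n => sum_f_R0 (tk x) n)).
  { exists (4 * x). intros y [n ->]. apply sum_tk; auto. }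
  destruct (growing_cv _ Hg Hb) as [l Hl].
  exists l. split.
  - apply (is_series_ext (fun k => RtoC (tk x k))).
    intro k. symmetry. apply term_eq.
    apply is_series_RtoC; auto.
  - apply is_lim_seq_Reals in Hl.
    assert (Rbar_le l (4 * x)).
    { apply (is_lim_seq_le (fun n => sum_f_R0 (tk x) n) (fun _ => 4 * x)); auto.
      intros; apply sum_tk; auto. apply is_lim_seq_const. }
    simpl in H. exact H.
Qed.
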